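(* Let $M$ be a metric space and $X$ a non-zero Banach space. Let $(x_n)_{n\in\mathbb N}\subseteq M$ and $r_n>0$ be such that the open balls $B(x_n,r_n)$, $n\in\mathbb N$, are pairwise disjoint. Then for every Lipschitz map $F:M\to X$ and every $\varepsilon>0$ there exists a Lipschitz map $G:M\to X$ such that the Lipschitz constant of $F-G$ is less than $\varepsilon$ and $G(x_n)\neq G(x_m)$ for all $n\neq m$. *)

(* Defs.v *)
From HB Require Import structures.
From mathcomp Require Import all_boot all_order all_algebra.
From mathcomp Require Import all_classical all_reals all_analysis.
Set Implicit Arguments. Unset Strict Implicit. Unset Printing Implicit Defensive.
Import Order.TTheory GRing.Theory Num.Theory.
Import numFieldNormedType.Exports.
Local Open Scope classical_set_scope.
Local Open Scope ring_scope.

Definition klipschitz_m (R : realType) (M : metricType R) (X : normedModType R)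
  (k : R) (f : M -> X) : Prop :=
  forall x y : M, `| f x - f y | <= k * mdist x y.

Definition lipschitz_m (R : realType) (M : metricType R) (X : normedModType R)
  (f : M -> X) : Prop :=
  exists k : R, klipschitz_m k f.

(* the Lipschitz constant (the least k, which is attained) of f is < e *)
Definition lipconst_lt (R : realType) (M : metricType R) (X : normedModType R)
  (f : M -> X) (e : R) : Prop :=
  exists2 k : R, k < e & klipschitz_m k f.

(* Main.v *)
Require Import Defs.
From HB Require Import structures.
From mathcomp Require Import all_boot all_order all_algebra.
From mathcomp Require Import all_classical all_reals all_analysis.
From mathcomp Require Import lra.
Import Order.TTheory GRing.Theory Num.Theory.
Import numFieldNormedType.Exports.
Local Open Scope classical_set_scope.
Local Open Scope ring_scope.

Section Aux.
Variables (R : realType) (X : normedModType R).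

Lemma avoid_aux (u a : X) (l : seq X) (rho : R) : u != 0 -> 0 < rho ->
  exists2 d : R, 0 < d <= rho &
    forall t, 0 < t <= d -> forall y, y \in l -> a - t *: u != y.
Proof.
move=> u0 rho0; elim: l => [|y l [d /andP[d0 drho] Hd]].
  by exists rho; rewrite ?rho0 ?lexx.
have [[t0 /andP[t00 t0d] Et0]|nex] :=
  pselect (exists2 t0, 0 < t0 <= d & a - t0 *: u = y).
  exists (t0 / 2); first by apply/andP; split; lra.
  move=> t /andP[t0' tt0] z; rewrite inE => /orP[/eqP ->|zl].
    rewrite -Et0; apply/negP => /eqP Eq.
    have := congr1 (fun z => z - a) Eq.
    rewrite ![_ - _ *: u - a]addrC !addKr => /eqP.
    rewrite eqr_opp -subr_eq0 -scalerBl scaler_eq0 (negbTE u0) orbF subr_eq0 => /eqP E.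
    lra.
  apply: Hd => //; apply/andP; split; lra.
exists d; first by rewrite d0.
move=> t td z; rewrite inE => /orP[/eqP ->|zl]; last exact: Hd.
apply/eqP => E; apply: nex; by exists t.
Qed.

Lemma lipmax (a b : R) : `|Num.max 0 a - Num.max 0 b| <= `|a - b|.
Proof.
have [a0|a0] := leP 0 a; have [b0|b0] := leP 0 b;
  rewrite ?(max_r a0) ?(max_r b0) ?(max_l (ltW a0)) ?(max_l (ltW b0));
  have [e|e] := leP 0 (a - b); rewrite ?(ger0_norm e) ?(ltr0_norm e);
  rewrite ?subrr ?normr0 ?sub0r ?subr0 ?normrN;
  try (have [f|f] := leP 0 a; rewrite ?(ger0_norm f) ?(ltr0_norm f));
  try (have [g|g] := leP 0 b; rewrite ?(ger0_norm g) ?(ltr0_norm g));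
  try lra.
Qed.

End Aux.

Theorem lemma2p6 (R : realType) (M : metricType R) (X : completeNormedModType R)
  (x : nat -> M) (r : nat -> R)
  (hX : exists v : X, v != 0)
  (hr : forall n, 0 < r n)
  (hdisj : forall n m : nat, n <> m -> ball (x n) (r n) `&` ball (x m) (r m) = set0) :
  forall (F : M -> X), lipschitz_m F ->
  forall eps : R, 0 < eps ->
  exists G : M -> X,
    [/\ lipschitz_m G,
        lipconst_lt (fun p => F p - G p) eps &
        forall n m : nat, n <> m -> G (x n) <> G (x m)].
Proof.
move=> F [k Fk] eps eps0.
have [v v0] := hX.
have nv0 : 0 < `|v| by rewrite normr_gt0.
pose u := (eps / 2 / `|v|) *: v.
have u0 : u != 0.
  by rewrite scaler_eq0 negb_or v0 andbT; apply/lt0r_neq0; rewrite !divr_gt0.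
have nu : `|u| = eps / 2.
  by rewrite normrZ ger0_norm ?divfK ?lt0r_neq0 // ltW // !divr_gt0.
pose good (l : seq R) (t : R) := [/\ 0 < t, t <= r (size l) / 2 &
  forall m, (m < size l)%N -> F (x (size l)) - t *: u <> F (x m) - nth 0 l m *: u].
have exgood : forall l, exists t, good l t.
  move=> l.
  have hr2 : 0 < r (size l) / 2 by rewrite divr_gt0.
  have [d /andP[d0 dr] Hd] := @avoid_aux _ _ u (F (x (size l)))
     [seq F (x m) - nth 0 l m *: u | m <- iota 0 (size l)] _ u0 hr2.
  exists d; split => // m ml E.
  have : F (x m) - nth 0 l m *: u \in [seq F (x m) - nth 0 l m *: u | m <- iota 0 (size l)].
    by apply: (map_f (fun m => F (x m) - nth 0 l m *: u)); rewrite mem_iota.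
  by move/(Hd d); rewrite d0 lexx E eqxx => /(_ isT).
pose step l := proj1_sig (cid (exgood l)).
pose W n := iter n (fun l => rcons l (step l)) [::].
have sizeW n : size (W n) = n.
  by elim: n => // n IH; rewrite /W iterS size_rcons -/(W n) IH.
pose w n := step (W n).
have nthW n m : (m < n)%N -> nth 0 (W n) m = w m.
  elim: n => // n IH; rewrite ltnS leq_eqVlt => /orP[/eqP ->|mn];
  rewrite /W iterS -/(W n) nth_rcons sizeW ?ltnn ?eqxx // ?mn; last exact: IH.
  all: try by rewrite ltnS leqnn.
  idtac.
have hw n : [/\ 0 < w n, w n <= r n / 2 &
  forall m, (m < n)%N -> F (x n) - w n *: u <> F (x m) - w m *: u].
  have := proj2_sig (cid (exgood (W n))); rewrite -/(step (W n)) -/(w n).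
  case; rewrite sizeW => h1 h2 h3; split => // m mn; rewrite -(nthW n m) //; exact: h3.
pose b n p := Num.max 0 (w n - mdist (x n) p).
have b_ge0 n p : 0 <= b n p by rewrite le_max lexx.
have b_pos n p : 0 < b n p -> mdist (x n) p < w n.
  by rewrite lt_max ltxx /= subr_gt0.
have bE n p : 0 < b n p -> b n p = w n - mdist (x n) p.
  move=> /b_pos h; rewrite /b max_r //; rewrite subr_ge0 ltW //.
have hrw n : w n < r n by have [h1 h2 _] := hw n; lra.
have un n m p : 0 < b n p -> 0 < b m p -> n = m.
  move=> /b_pos hn /b_pos hm; case: (eqVneq n m) => // /eqP nm.
  have : (ball (x n) (r n) `&` ball (x m) (r m)) p.
    rewrite !ballEmdist /=; split; apply: lt_trans (hrw _); by [].
  by rewrite hdisj.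
pose N p := match pselect (exists n, 0 < b n p) with
  left h => proj1_sig (cid h) | right _ => 0%N end.
have N1 n p : 0 < b n p -> N p = n.
  move=> h; rewrite /N; case: pselect => [h'|nh]; last by exfalso; apply nh; exists n.
  exact: un (proj2_sig (cid h')) h.
have N2 n p : n <> N p -> b n p = 0.
  move=> nN; apply/eqP; rewrite eq_le b_ge0 andbT leNgt; apply/negP => /N1 E.
  by apply nN.
pose phi p := b (N p) p.
have blip n p q : `|b n p - b n q| <= mdist p q.
  apply: le_trans (lipmax R _ _) _.
  have -> : w n - mdist (x n) p - (w n - mdist (x n) q) = mdist (x n) q - mdist (x n) p.
    by rewrite opprB addrC addrA subrK.
  have t1 := metric_triangle (x n) p q.
  have t2 := metric_triangle (x n) q p.
  rewrite (metric_sym q p) in t2.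
  rewrite ler_norml; apply/andP; split; lra.
have far n m p q : n <> m -> 0 < b n p -> 0 < b m q -> b n p + b m q <= mdist p q.
  move=> nm pn qm; rewrite (bE _ _ pn) (bE _ _ qm).
  have Dn : r n <= mdist (x n) (x m).
    rewrite leNgt; apply/negP => h.
    have : (ball (x n) (r n) `&` ball (x m) (r m)) (x m).
      by rewrite !ballEmdist /=; split => //; rewrite mdistxx.
    by rewrite hdisj.
  have Dm : r m <= mdist (x n) (x m).
    rewrite leNgt; apply/negP => h.
    have : (ball (x n) (r n) `&` ball (x m) (r m)) (x n).
      by rewrite !ballEmdist /=; split; rewrite ?mdistxx // metric_sym.
    by rewrite hdisj.
  have t1 := metric_triangle (x n) p (x m).
  have t2 := metric_triangle p q (x m).
  rewrite (metric_sym q (x m)) in t2.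
  have [_ h1 _] := hw n; have [_ h2 _] := hw m.
  lra.
have philip p q : `|phi p - phi q| <= mdist p q.
  rewrite /phi; case: (eqVneq (N p) (N q)) => [->|nm]; first exact: blip.
  have e1 : b (N q) p = 0 by apply: N2 => E; move: nm; rewrite E eqxx.
  have e2 : b (N p) q = 0 by apply: N2 => E; move: nm; rewrite E eqxx.
  have [z1|p1] := eqVneq (b (N p) p) 0.
    by have -> : b (N p) p = b (N q) p by rewrite z1 e1.
  have [z2|p2] := eqVneq (b (N q) q) 0.
    by have -> : b (N q) q = b (N p) q by rewrite z2 e2.
  have p1' : 0 < b (N p) p by rewrite lt_neqAle eq_sym p1 b_ge0.
  have p2' : 0 < b (N q) q by rewrite lt_neqAle eq_sym p2 b_ge0.
  apply: le_trans (ler_normB _ _) _.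
  by rewrite !ger0_norm ?b_ge0 //; apply: far => // E; move: nm; rewrite E eqxx.
have phix n : phi (x n) = w n.
  have pos : 0 < b n (x n).
    by rewrite /b mdistxx subr0 lt_max; have [-> _ _] := hw n; rewrite orbT.
  by rewrite /phi (N1 _ _ pos) /b mdistxx subr0 max_r // ltW //; have [] := hw n.
exists (fun p => F p - phi p *: u).
have E p : F p - (F p - phi p *: u) = phi p *: u by rewrite opprB addrC subrK.
have eps2 : 0 <= eps / 2 by rewrite ltW // divr_gt0.
split.
- exists (k + eps/2) => p q.
  have -> : F p - phi p *: u - (F q - phi q *: u) = (F p - F q) - (phi p - phi q) *: u.
    by rewrite scalerBl !opprB !addrA addrAC [in LHS](addrAC (F p)) [RHS]addrAC.
  apply: le_trans (ler_normB _ _) _.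
  rewrite normrZ nu mulrDl; apply: lerD; first exact: Fk.
  by rewrite mulrC ler_wpM2l.
- exists (eps/2); first lra.
  move=> p q /=; rewrite !E -scalerBl normrZ nu mulrC ler_wpM2l //.
- move=> n m nm; rewrite !phix.
  case: (ltngtP n m) => [nlm|mln|e]; last by [].
    by move=> E'; have [_ _ H] := hw m; exact: (H n nlm (esym E')).
  by move=> E'; have [_ _ H] := hw n; exact: (H m mln E').
Qed.
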